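(* A function quasi-norm $\rho$ over a $\sigma$-finite measure space $(\Omega,\Sigma,\mu)$ is locally dominating if and only if $\lim_{t\to0^+}\Phi[E,\rho](t)=0$ for every $E\in\Sigma$ with $\mu(E)<\infty$, where $\Phi[E,\rho](t)=\sup\{\rho(\chi_A):A\in\Sigma,\ A\subseteq E,\ \mu(A)\le t\}$.
   Context: $L_0^+(\mu)$: measurable functions $\Omega\to[0,\infty]$ modulo a.e. equality. A function quasi-norm is $\rho\colon L_0^+(\mu)\to[0,\infty]$ with (F1) $\rho(tf)=t\rho(f)$, $t\ge0$; (F2) $f\le g$ a.e. $\Rightarrow\rho(f)\le\rho(g)$; (F3) $\rho(\chi_E)<\infty$ if $\mu(E)<\infty$; (F4) for all $E$ with $\mu(E)<\infty$ and $\varepsilon>0$ there is $\delta>0$ with $\mu(A)\le\varepsilon$ whenever $A\subseteq E$ measurable and $\rho(\chi_A)\le\delta$; (F5) $\rho(f+g)\le\kappa(\rho(f)+\rho(g))$. $f\in L_0^+(\mu)$ with $\rho(f)<\infty$ is dominating if $\lim_n\rho(f_n)=0$ for every non-increasing $(f_n)$ in $L_0^+(\mu)$ with $f_1\le f$ and $\lim_nf_n=0$. $\rho$ is locally dominating if $\chi_E$ is dominating for every $E\in\Sigma$ with $\mu(E)<\infty$. *)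

(* Defs.v *)
From HB Require Import structures.
From mathcomp Require Import all_boot all_order all_algebra.
From mathcomp Require Import all_classical all_reals all_analysis.
From mathcomp Require Import measurable_realfun.
Set Implicit Arguments. Unset Strict Implicit. Unset Printing Implicit Defensive.
Import Order.TTheory GRing.Theory Num.Theory.
Local Open Scope classical_set_scope.
Local Open Scope ring_scope.
Local Open Scope ereal_scope.

Section QuasiNorm.
Context (d : measure_display) (T : measurableType d) (R : realType)
  (mu : {measure set T -> \bar R}).

Definition L0p (f : T -> \bar R) : Prop :=
  measurable_fun setT f /\ forall x, 0 <= f x.

Definition chi (E : set T) : T -> \bar R := fun x => (\1_E x)%:E.

Definition qn_nonneg (rho : (T -> \bar R) -> \bar R) : Prop :=
  forall f, L0p f -> 0 <= rho f.

Definition qn_F1 (rho : (T -> \bar R) -> \bar R) : Prop :=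
  forall f (t : R), L0p f -> (0 <= t)%R ->
    rho (fun x => t%:E * f x) = t%:E * rho f.

(* (F2) monotonicity w.r.t. a.e. order (this also gives invariance under
   a.e. equality, i.e. rho is well defined on L_0^+(mu)) *)
Definition qn_F2 (rho : (T -> \bar R) -> \bar R) : Prop :=
  forall f g, L0p f -> L0p g -> {ae mu, forall x, f x <= g x} ->
    rho f <= rho g.

Definition qn_F3 (rho : (T -> \bar R) -> \bar R) : Prop :=
  forall E, measurable E -> mu E < +oo -> (rho (chi E) < +oo).

Definition qn_F4 (rho : (T -> \bar R) -> \bar R) : Prop :=
  forall E, measurable E -> mu E < +oo -> forall eps : R, (0 < eps)%R ->
    exists delta : R, (0 < delta)%R /\
      forall A, measurable A -> A `<=` E -> rho (chi A) <= delta%:E ->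
        mu A <= eps%:E.

Definition qn_F5 (rho : (T -> \bar R) -> \bar R) : Prop :=
  exists kappa : R, (1 <= kappa)%R /\
    forall f g, L0p f -> L0p g ->
      rho (fun x => f x + g x) <= kappa%:E * (rho f + rho g).

Definition function_quasi_norm (rho : (T -> \bar R) -> \bar R) : Prop :=
  [/\ qn_nonneg rho, qn_F1 rho, qn_F2 rho, qn_F3 rho & (qn_F4 rho /\ qn_F5 rho)].

Definition dominating (rho : (T -> \bar R) -> \bar R) (f : T -> \bar R) : Prop :=
  [/\ L0p f, rho f < +oo &
      forall fn : nat -> T -> \bar R,
        (forall n, L0p (fn n)) ->
        (forall n, {ae mu, forall x, fn n.+1 x <= fn n x}) ->
        {ae mu, forall x, fn 0%N x <= f x} ->
        {ae mu, forall x, (fun n => fn n x) @ \oo --> 0} ->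
        (fun n => rho (fn n)) @ \oo --> 0].

Definition locally_dominating (rho : (T -> \bar R) -> \bar R) : Prop :=
  forall E, measurable E -> mu E < +oo -> dominating rho (chi E).

Definition Phi (E : set T) (rho : (T -> \bar R) -> \bar R) (t : R) : \bar R :=
  ereal_sup [set rho (chi A) | A in [set A | [/\ measurable A, A `<=` E & mu A <= t%:E]]].

End QuasiNorm.

(* Main.v *)
Require Import Defs.
From HB Require Import structures.
From mathcomp Require Import all_boot all_order all_algebra.
From mathcomp Require Import all_classical all_reals all_analysis.
From mathcomp Require Import measurable_realfun.
From mathcomp Require Import lra ring.
Import Order.TTheory GRing.Theory Num.Theory.
Local Open Scope classical_set_scope.
Local Open Scope ring_scope.
Local Open Scope ereal_scope.

Lemma cvge0_le (R : realType) (X : Type) (F : set_system X) (FF : Filter F)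
  (f : X -> \bar R) : f @ F --> 0 ->
  forall e : R, (0 < e)%R -> \forall x \near F, f x <= e%:E.
Proof.
move=> /fine_cvgP [fin cf] e e0.
have := @cvgr_lt _ _ F FF (fine \o f) 0%R cf e e0; apply: filter_app; apply: filterS fin => x fx /= lt.
by rewrite -(fineK fx) lee_fin ltW.
Qed.

Lemma cvge0_ge (R : realType) (X : Type) (F : set_system X) (FF : Filter F)
  (f : X -> \bar R) :
  (forall e : R, (0 < e)%R -> \forall x \near F, 0 <= f x <= e%:E) ->
  f @ F --> 0.
Proof.
move=> H; apply/fine_cvgP; split.
  apply: filterS (H 1%R ltr01) => x /andP[f0 f1].
  by rewrite ge0_fin_numE // (le_lt_trans f1) // ltry.
apply/cvgrPdist_le => e e0; apply: filterS (H e e0) => x /andP[f0 f1] /=.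
have fx : f x \is a fin_num by rewrite ge0_fin_numE // (le_lt_trans f1) // ltry.
rewrite sub0r normrN ger0_norm ?fine_ge0 //.
by rewrite -lee_fin fineK.
Qed.

Arguments cvge0_le {R X F FF f}.
Arguments cvge0_ge {R X F FF f}.
Section S.
Context (d : measure_display) (T : measurableType d) (R : realType)
  (mu : {measure set T -> \bar R}) (rho : (T -> \bar R) -> \bar R).
Hypothesis qn : function_quasi_norm mu rho.

Lemma L0p_chi {A : set T} : measurable A -> L0p (chi R A).
Proof.
move=> mA; split.
  by apply/measurable_EFinP; exact: measurable_indic.
by move=> x; rewrite /chi lee_fin indicE; case: (x \in A).
Qed.

Lemma rho_chi_ge0 {A : set T} : measurable A -> 0 <= rho (chi R A).
Proof. by case: qn => h _ _ _ _ mA; apply/h/L0p_chi. Qed.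

Lemma rho_chi_le {A B : set T} : measurable A -> measurable B -> A `<=` B ->
  rho (chi R A) <= rho (chi R B).
Proof.
case: qn => _ _ h _ _ mA mB AB; apply: h; try exact: L0p_chi.
apply: aeW => x; rewrite /chi lee_fin !indicE.
case: (boolP (x \in A)) => xA; last by case: (x \in B).
by rewrite (_ : x \in B) // inE; apply: AB; rewrite -inE.
Qed.

Lemma Phi_ge0 (E : set T) {t} : (0 <= t)%R -> 0 <= Phi mu E rho t.
Proof.
move=> t0; apply: (le_trans (@rho_chi_ge0 set0 measurable0)); rewrite /Phi.
apply: ereal_sup_ubound; exists set0 => //; split => //.
by rewrite measure0 lee_fin.
Qed.

Lemma Phi_le (E : set T) {s t} : (s <= t)%R -> Phi mu E rho s <= Phi mu E rho t.
Proof.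
move=> st; apply: le_ereal_sup => _ [A [mA AE muA] <-]; exists A => //.
by split => //; apply: le_trans muA _; rewrite lee_fin.
Qed.


Lemma dir2 (E : set T) : measurable E -> mu E < +oo ->
  Phi mu E rho t @[t --> 0%R^'+] --> 0 -> dominating mu rho (chi R E).
Proof.
move=> mE muE hPhi.
case: (qn) => h0 h1 h2 h3 [_ [k [k1 h5]]].
split; [exact: L0p_chi | exact: h3 |].
move=> fn fL fdec f0 fcv.
have fleE : \forall x \ae mu, forall n, fn n x <= chi R E x.
  apply: filterS2 f0 (ae_foralln fdec) => x hx hd n.
  by elim: n => // n ih; exact: le_trans (hd n) ih.
have rfin : rho (chi R E) \is a fin_num.
  by rewrite ge0_fin_numE ?rho_chi_ge0 ?h3.
set r := fine (rho (chi R E)).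
have rE : rho (chi R E) = r%:E by rewrite fineK.
have r0 : (0 <= r)%R by rewrite -lee_fin -rE rho_chi_ge0.
have k0 : (0 < k)%R by apply: lt_le_trans k1.
apply: cvge0_ge => eps eps0.
set del := (eps / (2 * k))%R.
have del0 : (0 < del)%R by rewrite divr_gt0 // mulr_gt0.
have [t [t0 Pt]] : exists t, (0 < t)%R /\ Phi mu E rho t <= del%:E.
  apply: (@filter_ex _ ((0%R : R)^'+) _).
  apply: filterS2 (nbhs_right_gt (0%R:R)) (cvge0_le hPhi _ del0) => s s0 Ps; exact: (conj s0 Ps).
set e := (del / (r + 1))%R.
have e0 : (0 < e)%R by rewrite divr_gt0 // ltr_wpDl.
set A := fun n => E `&` [set x | e%:E < fn n x].
have mA n : measurable (A n).
  apply: emeasurable_fun_o_infty => //.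
  by apply: measurable_funS (fL n).1.
have AE n : A n `<=` E by move=> x [].
set B := fun n => \bigcup_(m in [set m | (n <= m)%N]) A m.
have mB n : measurable (B n) by apply: bigcup_measurable => m _; exact: mA.
have BE n : B n `<=` E by move=> x [m _ [] ].
set C := \bigcap_n B n.
have mC : measurable C by apply: bigcap_measurable => //; exists 0%N.
have muC : mu C = 0.
  case: fcv => N [mN muN0 sub].
  apply: (subset_measure0 mC mN) => // x Cx.
  apply: contrapT => Nx.
  have Px : (fun n => fn n x) @ \oo --> 0.
    by apply: contrapT => nPx; apply: Nx; apply: sub.
  have e20 : (0 < e / 2)%R by rewrite divr_gt0.
  have [M _ HM] := cvge0_le Px _ e20.
  have [m /= Mm [_ /=]] := Cx M I.
  apply/negP; rewrite -leNgt; apply: le_trans (HM m Mm) _.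
  rewrite lee_fin ler_pdivrMr // ler_peMr // ?ltW //.
  by rewrite ltr1n.
have muB : mu \o B @ \oo --> 0.
  rewrite -muC; apply: nonincreasing_cvg_mu => //.
  - by apply: le_lt_trans muE; apply: le_measure => //; rewrite inE.
  - move=> m n mn; apply/subsetPset => x [j /= nj Ajx].
    by exists j => //=; apply: leq_trans nj.
have t20 : (0 < t / 2)%R by rewrite divr_gt0.
apply: filterS (cvge0_le muB _ t20) => n /= muBn.
apply/andP; split; first exact: h0.
have L0e : L0p (fun x => e%:E * chi R E x).
  split; first by apply: measurable_funeM; exact: (proj1 (L0p_chi mE)).
  by move=> x; rewrite mule_ge0 ?lee_fin ?(ltW e0) //; exact: (proj2 (L0p_chi mE)).
have L0A := L0p_chi (mA n).
have L0s : L0p (fun x => e%:E * chi R E x + chi R (A n) x).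
  split; first exact: emeasurable_funD (proj1 L0e) (proj1 L0A).
  by move=> x; rewrite adde_ge0 //; [exact: (proj2 L0e) | exact: (proj2 L0A)].
apply: le_trans (h2 _ _ (fL n) L0s _) _.
  apply: filterS fleE => x /(_ n); rewrite /chi !indicE.
  have fx0 := (fL n).2 x.
  case: (boolP (x \in E)) => xE /=; last first.
    move=> fle; apply: le_trans fle _.
    by rewrite mule0 add0e lee_fin ler0n.
  move=> fle; case: (boolP (e%:E < fn n x)) => fe.
    have -> : x \in A n by rewrite inE; split => //; rewrite -inE.
    apply: le_trans fle _; rewrite mule1 -[X in X <= _]add0e.
    by apply: leeD; rewrite ?lee_fin ?(ltW e0).
  rewrite mule1 -[X in X <= _]adde0; apply: leeD; first by rewrite leNgt.
  by rewrite lee_fin ler0n.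
apply: le_trans (h5 _ _ L0e L0A) _.
rewrite h1 ?(ltW e0) //; last exact: L0p_chi.
rewrite rE.
have rhoA : rho (chi R (A n)) <= del%:E.
  apply: le_trans Pt; apply: ereal_sup_ubound; exists (A n) => //.
  have ABn : A n `<=` B n by move=> x Ax; exists n => //=.
  split => //; apply: le_trans (le_measure _ _ _ ABn) _; rewrite ?inE //.
  apply: le_trans muBn _; rewrite lee_fin ler_pdivrMr // ler_peMr ?ltW //.
  lra.
apply: (@le_trans _ _ (k%:E * (e%:E * r%:E + del%:E))%E).
  apply: lee_wpmul2l; first by rewrite lee_fin ltW.
  by apply: leeD.
rewrite -EFinM lee_fin.
have er : (e * r <= del)%R.
  rewrite /e mulrAC ler_pdivrMr ?ltr_wpDl //.
  by apply: ler_wpM2l; [exact: ltW | rewrite lerDl].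
have -> : eps = (k * (del + del))%R.
  rewrite /del; field; by rewrite gt_eqF.
apply: ler_wpM2l; first exact: ltW.
by apply: lerD.
Qed.

Lemma chi_le (A B : set T) x : A `<=` B -> chi R A x <= chi R B x.
Proof.
move=> AB; rewrite /chi lee_fin !indicE.
case: (boolP (x \in A)) => xA; last by case: (x \in B).
by rewrite (_ : x \in B) // inE; apply: AB; rewrite -inE.
Qed.

Lemma dir1 (E : set T) : measurable E -> mu E < +oo ->
  locally_dominating mu rho -> Phi mu E rho t @[t --> 0%R^'+] --> 0.
Proof.
move=> mE muE LD.
apply: cvge0_ge => eps eps0.
suff [t0 [t00 Pt0]] : exists t0, (0 < t0)%R /\ Phi mu E rho t0 <= eps%:E.
  apply: filterS2 (nbhs_right_gt (0%R:R)) (nbhs_right_lt t00) => t tpos tt0.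
  rewrite (Phi_ge0 E (ltW tpos)) /=; exact: le_trans (Phi_le E (ltW tt0)) Pt0.
apply: contrapT => nex.
have H (t : R) : (0 < t)%R -> exists A, [/\ measurable A, A `<=` E, mu A <= t%:E &
    eps%:E < rho (chi R A)].
  move=> t0; have : eps%:E < Phi mu E rho t.
    by rewrite ltNge; apply/negP => le; apply: nex; exists t.
  by move=> /ereal_sup_gt [_ [A [mA AE muA] <-] lt]; exists A.
pose ts := fun m : nat => ((m.+1%:R)^-1 / (2 ^ m.+1)%:R : R)%R.
have ts0 m : (0 < ts m)%R by rewrite divr_gt0 // ?invr_gt0 // ltr0n expn_gt0.
have [A HA] := choice (fun m => H (ts m) (ts0 m)).
have mA m : measurable (A m) by case: (HA m).
set B := fun n => \bigcup_(m in [set m | (n <= m)%N]) A m.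
have mB n : measurable (B n) by apply: bigcup_measurable => m _; exact: mA.
have BE n : B n `<=` E by move=> x [m _]; case: (HA m) => _ + _ _; apply.
have Bdec m n : (m <= n)%N -> B n `<=` B m.
  by move=> mn x [j /= nj Ajx]; exists j => //=; apply: leq_trans nj.
set C := \bigcap_n B n.
have mC : measurable C by apply: bigcap_measurable => //; exists 0%N.
have muC : mu C = 0.
  apply/eqP; rewrite eq_le measure_ge0 andbT.
  apply/lee_addgt0Pr => e e0; rewrite add0e.
  have [N _ HN] := near_infty_natSinv_lt (PosNum e0).
  have := HN N (leqnn N) => /= /ltW HNe.
  apply: (@le_trans _ _ (mu (B N))).
    by apply: le_measure; rewrite ?inE // => x; apply.
  apply: le_trans (@measure_sigma_subadditive_tail _ _ _ mu (B N) A N mA (mB N) _) _.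
    by move=> x [m /= Nm Amx]; exists m => //=; rewrite leqNgt in Nm; apply/negP.
  apply: (@le_trans _ _ (\sum_(N <= m <oo) ((N.+1%:R)^-1 / (2 ^ m.+1)%:R)%:E)).
    rewrite eseries_cond [X in _ <= X]eseries_cond.
    apply: lee_nneseries => [m _ _|m /= Nm]; first exact: measure_ge0.
    case: (HA m) => _ _ muAm _; apply: le_trans muAm _; rewrite lee_fin.
    rewrite /ts ler_pM2r ?invr_gt0 ?ltr0n ?expn_gt0 //.
    by rewrite lef_pV2 ?posrE ?ltr0n // ler_nat ltnS.
  rewrite eseries_cond.
  apply: le_trans (epsilon_trick0 _ _) _ => //.
have [_ _ Hd] := LD E mE muE.
have := Hd (fun n => chi R (B n)) (fun n => L0p_chi (mB n)).
have /[swap]/[apply] : forall n, {ae mu, forall x, chi R (B n.+1) x <= chi R (B n) x}.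
  by move=> n; apply: aeW => x; apply: chi_le; apply: Bdec.
have /[swap]/[apply] : {ae mu, forall x, chi R (B 0%N) x <= chi R E x}.
  by apply: aeW => x; apply: chi_le.
have /[swap]/[apply] : {ae mu, forall x, (fun n => chi R (B n) x) @ \oo --> 0}.
  exists C; split => // x /= nPx; apply: contrapT => nCx; apply: nPx.
  have : ~ (forall n, B n x) by move=> h; apply: nCx => n _; exact: h n.
  move=> /existsNP [N nBN].
  apply: cvg_near_cst; exists N => // n /= Nn.
  rewrite /chi indicE memNset //; move=> Bn; apply: nBN; exact: Bdec Bn.
move=> cv.
have [n /= le] := filter_ex (cvge0_le cv _ eps0).
case: (HA n) => _ _ _ lt.
have ABn : A n `<=` B n by move=> x Ax; exists n => //=.
have := lt_le_trans lt (le_trans (rho_chi_le (mA n) (mB n) ABn) le).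
by rewrite ltxx.
Qed.
End S.

Theorem corollary3p23 (d : measure_display) (T : measurableType d) (R : realType)
  (mu : {measure set T -> \bar R}) (rho : (T -> \bar R) -> \bar R) :
  sigma_finite setT mu ->
  function_quasi_norm mu rho ->
  (locally_dominating mu rho <->
   forall E, measurable E -> mu E < +oo ->
     Phi mu E rho t @[t --> 0%R^'+] --> 0).
Proof.
move=> _ qn; split.
- by move=> LD E mE muE; exact: dir1.
- by move=> H E mE muE; apply: dir2 => //; exact: H.
Qed.
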